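(* Let $\ell:K(H\times\mathrm{Id})\to HM$ be an abstract GSOS rule with $\ell$-interpretation $b:KC\to C$, let $k=c^{-1}\cdot Hb^\sharp:HMC\to C$ and $k'=b^\sharp\cdot Mk:MHMC\to C$. Then $(C,k')$ is a completely iterative algebra for the functor $MHM$.
   Context: Let $\mathcal A$ be a category with binary products and coproducts, let $H:\mathcal A\to\mathcal A$ be a functor with a terminal coalgebra $c:C\to HC$ (so $c$ is an isomorphism by Lambek's lemma), and let $K:\mathcal A\to\mathcal A$ be a functor such that every object $X$ has a free $K$-algebra $\varphi_X:KMX\to MX$ with universal morphism $\eta_X:X\to MX$. Then $(M,\eta,\mu)$ is the free monad on $K$, and $\kappa=\varphi\cdot K\eta:K\to M$. For a $K$-algebra $a:KA\to A$ let $a^\sharp:MA\to A$ be the unique $K$-algebra homomorphism with $a^\sharp\cdot\eta_A=\mathrm{id}_A$; it is an Eilenberg–Moore algebra for $M$. An abstract GSOS rule is a natural transformation $\ell:K(H\times\mathrm{Id})\to HM$; its $\ell$-interpretation is the unique morphism $b:KC\to C$ with $c\cdot b=Hb^\sharp\cdot\ell_C\cdot K\langle c,\mathrm{id}_C\rangle$. For an endofunctor $G$, a flat equation morphism in an object $A$ is a morphism $e:X\to GX+A$; a $G$-algebra $a:GA\to A$ is a completely iterative algebra (cia) if every flat equation morphism $e:X\to GX+A$ has a unique solution, i.e. a unique $e^\dagger:X\to A$ with $e^\dagger=[a,\mathrm{id}_A]\cdot(Ge^\dagger+\mathrm{id}_A)\cdot e$. *)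

(* Defs.v *)
(* Hom-sets use Leibniz equality. *)
Set Implicit Arguments.
Unset Strict Implicit.

Record Category := {
  Obj :> Type;
  Hom : Obj -> Obj -> Type;
  idm : forall X, Hom X X;
  comp : forall X Y Z, Hom Y Z -> Hom X Y -> Hom X Z;
  comp_id_l : forall X Y (f : Hom X Y), comp (idm Y) f = f;
  comp_id_r : forall X Y (f : Hom X Y), comp f (idm X) = f;
  comp_assoc : forall X Y Z W (h : Hom Z W) (g : Hom Y Z) (f : Hom X Y),
      comp h (comp g f) = comp (comp h g) f
}.
Arguments Hom {c} _ _.
Arguments idm {c} X.
Arguments comp {c X Y Z} _ _.

Notation "g ∘ f" := (comp g f) (at level 40, left associativity).

Record Functor (A : Category) := {
  fobj :> A -> A;
  fmap : forall X Y : A, Hom X Y -> Hom (fobj X) (fobj Y);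
  fmap_id : forall X : A, fmap (idm X) = idm (fobj X);
  fmap_comp : forall (X Y Z : A) (g : Hom Y Z) (f : Hom X Y),
      fmap (g ∘ f) = fmap g ∘ fmap f
}.
Arguments fmap {A} f0 {X Y} _.

Lemma Fcomp_id (A : Category) (F G : Functor A) (X : A) :
  fmap F (fmap G (idm X)) = idm (F (G X)).
Proof. rewrite !fmap_id; reflexivity. Qed.

Lemma Fcomp_comp (A : Category) (F G : Functor A) (X Y Z : A)
  (g : Hom Y Z) (f : Hom X Y) :
  fmap F (fmap G (g ∘ f)) = fmap F (fmap G g) ∘ fmap F (fmap G f).
Proof. rewrite !fmap_comp; reflexivity. Qed.

Definition Fcomp (A : Category) (F G : Functor A) : Functor A :=
  {| fobj := fun X => F (G X);
     fmap := fun X Y f => fmap F (fmap G f);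
     fmap_id := Fcomp_id F G; fmap_comp := Fcomp_comp F G |}.

Record BinProducts (A : Category) := {
  bprod : A -> A -> A;
  pi1 : forall X Y : A, Hom (bprod X Y) X;
  pi2 : forall X Y : A, Hom (bprod X Y) Y;
  pairing : forall Z X Y : A, Hom Z X -> Hom Z Y -> Hom Z (bprod X Y);
  pi1_pair : forall Z X Y (f : Hom Z X) (g : Hom Z Y), pi1 X Y ∘ pairing f g = f;
  pi2_pair : forall Z X Y (f : Hom Z X) (g : Hom Z Y), pi2 X Y ∘ pairing f g = g;
  pair_unique : forall Z X Y (f : Hom Z X) (g : Hom Z Y) (h : Hom Z (bprod X Y)),
      pi1 X Y ∘ h = f -> pi2 X Y ∘ h = g -> h = pairing f g
}.
Arguments bprod {A} P _ _ : rename.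
Arguments pi1 {A} P {X Y} : rename.
Arguments pi2 {A} P {X Y} : rename.
Arguments pairing {A} P {Z X Y} _ _ : rename.

Record BinCoproducts (A : Category) := {
  bcoprod : A -> A -> A;
  inl_ : forall X Y : A, Hom X (bcoprod X Y);
  inr_ : forall X Y : A, Hom Y (bcoprod X Y);
  copair : forall X Y Z : A, Hom X Z -> Hom Y Z -> Hom (bcoprod X Y) Z;
  copair_inl : forall X Y Z (f : Hom X Z) (g : Hom Y Z), copair f g ∘ inl_ X Y = f;
  copair_inr : forall X Y Z (f : Hom X Z) (g : Hom Y Z), copair f g ∘ inr_ X Y = g;
  copair_unique : forall X Y Z (f : Hom X Z) (g : Hom Y Z) (h : Hom (bcoprod X Y) Z),
      h ∘ inl_ X Y = f -> h ∘ inr_ X Y = g -> h = copair f g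
}.
Arguments bcoprod {A} S _ _ : rename.
Arguments inl_ {A} S {X Y} : rename.
Arguments inr_ {A} S {X Y} : rename.
Arguments copair {A} S {X Y Z} _ _ : rename.

Definition coprod_map (A : Category) (S : BinCoproducts A) (X Y X' Y' : A)
  (f : Hom X X') (g : Hom Y Y') : Hom (bcoprod S X Y) (bcoprod S X' Y') :=
  copair S (inl_ S ∘ f) (inr_ S ∘ g).

Definition is_terminal_coalgebra (A : Category) (H : Functor A) (C : A)
  (c : Hom C (H C)) : Prop :=
  forall (X : A) (x : Hom X (H X)), exists! f : Hom X C, c ∘ f = fmap H f ∘ x.

(* Every object X has a free K-algebra phi_X : K(MX) -> MX with universal
   morphism eta_X : X -> MX; [ext a f] is the unique K-algebra homomorphism
   MX -> A extending f : X -> A for the algebra a : KA -> A. *)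
Record FreeAlgebras (A : Category) (K : Functor A) := {
  Mo : A -> A;
  phi : forall X : A, Hom (K (Mo X)) (Mo X);
  eta : forall X : A, Hom X (Mo X);
  ext : forall (X Y : A), Hom (K Y) Y -> Hom X Y -> Hom (Mo X) Y;
  ext_eta : forall X Y (a : Hom (K Y) Y) (f : Hom X Y), ext a f ∘ eta X = f;
  ext_hom : forall X Y (a : Hom (K Y) Y) (f : Hom X Y),
      ext a f ∘ phi X = a ∘ fmap K (ext a f);
  ext_unique : forall X Y (a : Hom (K Y) Y) (f : Hom X Y) (h : Hom (Mo X) Y),
      h ∘ eta X = f -> h ∘ phi X = a ∘ fmap K h -> h = ext a f
}.
Arguments Mo {A K} F _ : rename.
Arguments phi {A K} F X : rename.
Arguments eta {A K} F X : rename.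
Arguments ext {A K} F {X Y} _ _ : rename.

Definition sharp (A : Category) (K : Functor A) (F : FreeAlgebras K) (Y : A)
  (a : Hom (K Y) Y) : Hom (Mo F Y) Y := ext F a (idm Y).

Definition Mmap (A : Category) (K : Functor A) (F : FreeAlgebras K) (X Y : A)
  (f : Hom X Y) : Hom (Mo F X) (Mo F Y) := ext F (phi F Y) (eta F Y ∘ f).

Lemma Mmap_id (A : Category) (K : Functor A) (F : FreeAlgebras K) (X : A) :
  Mmap F (idm X) = idm (Mo F X).
Proof.
  unfold Mmap. symmetry. apply ext_unique.
  - rewrite comp_id_l, comp_id_r; reflexivity.
  - rewrite comp_id_l, fmap_id, comp_id_r; reflexivity.
Qed.

Lemma Mmap_comp (A : Category) (K : Functor A) (F : FreeAlgebras K) (X Y Z : A)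
  (g : Hom Y Z) (f : Hom X Y) : Mmap F (g ∘ f) = Mmap F g ∘ Mmap F f.
Proof.
  unfold Mmap. symmetry. apply ext_unique.
  - rewrite <- comp_assoc, ext_eta, comp_assoc, ext_eta, comp_assoc; reflexivity.
  - rewrite <- comp_assoc, ext_hom, comp_assoc, ext_hom, <- comp_assoc,
      <- fmap_comp; reflexivity.
Qed.

Definition Mfun (A : Category) (K : Functor A) (F : FreeAlgebras K) : Functor A :=
  {| fobj := Mo F; fmap := fun X Y f => Mmap F f;
     fmap_id := Mmap_id F; fmap_comp := Mmap_comp F |}.

Definition is_gsos_rule (A : Category) (P : BinProducts A) (H K : Functor A)
  (F : FreeAlgebras K) (l : forall X : A, Hom (K (bprod P (H X) X)) (H (Mo F X))) : Prop :=
  forall (X Y : A) (f : Hom X Y),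
    l Y ∘ fmap K (pairing P (fmap H f ∘ pi1 P) (f ∘ pi2 P)) = fmap H (Mmap F f) ∘ l X.

Definition is_interpretation (A : Category) (P : BinProducts A) (H K : Functor A)
  (F : FreeAlgebras K) (l : forall X : A, Hom (K (bprod P (H X) X)) (H (Mo F X)))
  (C : A) (c : Hom C (H C)) (b : Hom (K C) C) : Prop :=
  c ∘ b = fmap H (sharp F b) ∘ l C ∘ fmap K (pairing P c (idm C)).

Definition is_cia (A : Category) (S : BinCoproducts A) (G : Functor A) (A0 : A)
  (a : Hom (G A0) A0) : Prop :=
  forall (X : A) (e : Hom X (bcoprod S (G X) A0)),
    exists! s : Hom X A0,
      s = copair S a (idm A0) ∘ coprod_map S (fmap G s) (idm A0) ∘ e.

(* Main.v *)
Require Import Defs.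
Set Implicit Arguments.
Unset Strict Implicit.

Section Gen.
Variable A : Category.

Lemma cA {X Y Z W : A} (h : Hom Z W) (g : Hom Y Z) (f : Hom X Y) :
  h ∘ (g ∘ f) = (h ∘ g) ∘ f.
Proof. apply comp_assoc. Qed.

Variable P : BinProducts A.

Lemma pair_comp {W Z X Y : A} (f : Hom Z X) (g : Hom Z Y) (h : Hom W Z) :
  pairing P f g ∘ h = pairing P (f ∘ h) (g ∘ h).
Proof.
  apply pair_unique; rewrite cA; [rewrite pi1_pair|rewrite pi2_pair]; reflexivity.
Qed.

Lemma pair_ext {Z X Y : A} (h h' : Hom Z (bprod P X Y)) :
  pi1 P ∘ h = pi1 P ∘ h' -> pi2 P ∘ h = pi2 P ∘ h' -> h = h'.
Proof.
  intros E1 E2. rewrite (pair_unique E1 E2).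
  symmetry; apply pair_unique; reflexivity.
Qed.

Variable S : BinCoproducts A.

Lemma copair_comp {X Y Z W : A} (f : Hom X Z) (g : Hom Y Z) (h : Hom Z W) :
  h ∘ copair S f g = copair S (h ∘ f) (h ∘ g).
Proof.
  apply copair_unique; rewrite <- cA; [rewrite copair_inl|rewrite copair_inr]; reflexivity.
Qed.

Lemma copair_ext {X Y Z : A} (h h' : Hom (bcoprod S X Y) Z) :
  h ∘ inl_ S = h' ∘ inl_ S -> h ∘ inr_ S = h' ∘ inr_ S -> h = h'.
Proof.
  intros E1 E2. rewrite (copair_unique E1 E2).
  symmetry; apply copair_unique; reflexivity.
Qed.

Variables H K : Functor A.
Variable F : FreeAlgebras K.

Lemma ext_fusion {X Y Y' : A} (a : Hom (K Y) Y) (a' : Hom (K Y') Y') (h : Hom Y Y')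
  (f : Hom X Y) : h ∘ a = a' ∘ fmap K h -> h ∘ ext F a f = ext F a' (h ∘ f).
Proof.
  intro Hh. apply ext_unique.
  - rewrite <- cA, ext_eta; reflexivity.
  - rewrite <- cA, ext_hom, cA, Hh, <- cA, <- fmap_comp; reflexivity.
Qed.

Lemma ext_id (X : A) : ext F (phi F X) (eta F X) = idm (Mo F X).
Proof.
  symmetry; apply ext_unique.
  - apply comp_id_l.
  - rewrite comp_id_l, fmap_id, comp_id_r; reflexivity.
Qed.

Lemma ext_kl {X Y Z : A} (a : Hom (K Z) Z) (f : Hom Y Z) (g : Hom X (Mo F Y)) :
  ext F a f ∘ ext F (phi F Y) g = ext F a (ext F a f ∘ g).
Proof. apply ext_fusion. apply ext_hom. Qed.

Definition mu (X : A) : Hom (Mo F (Mo F X)) (Mo F X) := ext F (phi F X) (idm _).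

Lemma mu_eta (X : A) : mu X ∘ eta F (Mo F X) = idm _.
Proof. apply ext_eta. Qed.

Lemma mu_Meta (X : A) : mu X ∘ Mmap F (eta F X) = idm _.
Proof. unfold mu, Mmap. rewrite ext_kl, cA, ext_eta, comp_id_l. apply ext_id. Qed.

Lemma mu_phi (X : A) : mu X ∘ phi F _ = phi F X ∘ fmap K (mu X).
Proof. apply ext_hom. Qed.

Lemma mu_assoc (X : A) : mu X ∘ mu (Mo F X) = mu X ∘ Mmap F (mu X).
Proof.
  unfold mu, Mmap. rewrite !ext_kl, comp_id_r, cA, ext_eta, comp_id_l.
  reflexivity.
Qed.

End Gen.
Set Implicit Arguments.
Unset Strict Implicit.

Section G2.
Variable A : Category.
Variable P : BinProducts A.
Variables H K : Functor A.
Variable F : FreeAlgebras K.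
Variable l : forall X : A, Hom (K (bprod P (H X) X)) (H (Mo F X)).
Hypothesis Hl : is_gsos_rule l.

Definition algL (L : A) : Hom (K (bprod P (H (Mo F L)) (Mo F L))) (bprod P (H (Mo F L)) (Mo F L)) :=
  pairing P (fmap H (mu F L) ∘ l (Mo F L)) (phi F L ∘ fmap K (pi2 P)).

Definition bplus {L : A} (beta : Hom L (H (Mo F L))) : Hom (Mo F L) (H (Mo F L)) :=
  pi1 P ∘ ext F (algL L) (pairing P beta (eta F L)).

Lemma bplus_ext {L : A} (beta : Hom L (H (Mo F L))) :
  ext F (algL L) (pairing P beta (eta F L)) = pairing P (bplus beta) (idm _).
Proof.
  apply pair_unique; [reflexivity|].
  assert (Hp : pi2 P ∘ algL L = phi F L ∘ fmap K (pi2 P)) by (unfold algL; apply pi2_pair).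
  rewrite (ext_fusion F _ Hp), pi2_pair. apply ext_id.
Qed.

Lemma bplus_eta {L : A} (beta : Hom L (H (Mo F L))) : bplus beta ∘ eta F L = beta.
Proof. unfold bplus. rewrite <- cA, ext_eta, pi1_pair. reflexivity. Qed.

Lemma bplus_phi {L : A} (beta : Hom L (H (Mo F L))) :
  bplus beta ∘ phi F L = fmap H (mu F L) ∘ l (Mo F L) ∘ fmap K (pairing P (bplus beta) (idm _)).
Proof.
  unfold bplus at 1. rewrite <- cA, ext_hom, bplus_ext, cA. unfold algL. rewrite pi1_pair.
  reflexivity.
Qed.

End G2.
Set Implicit Arguments.
Unset Strict Implicit.

Section G3.
Variable A : Category.
Variable P : BinProducts A.
Variables H K : Functor A.
Variable F : FreeAlgebras K.
Variable l : forall X : A, Hom (K (bprod P (H X) X)) (H (Mo F X)).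
Hypothesis Hl : is_gsos_rule l.

Lemma pairing_nat {X Y Z : A} (f : Hom X Y) (u : Hom Z (H X)) (v : Hom Z X) :
  pairing P (fmap H f ∘ u) (f ∘ v) = pairing P (fmap H f ∘ pi1 P) (f ∘ pi2 P) ∘ pairing P u v.
Proof. rewrite pair_comp, <- !cA, pi1_pair, pi2_pair. reflexivity. Qed.

Lemma l_nat {X Y Z : A} (f : Hom X Y) (u : Hom Z (H X)) (v : Hom Z X) :
  l Y ∘ fmap K (pairing P (fmap H f ∘ u) (f ∘ v)) = fmap H (Mmap F f) ∘ l X ∘ fmap K (pairing P u v).
Proof. rewrite pairing_nat, fmap_comp, cA, Hl. reflexivity. Qed.

Lemma l_nat1 {X Y : A} (f : Hom X Y) (u : Hom X (H X)) :
  l Y ∘ fmap K (pairing P (fmap H f ∘ u) f) = fmap H (Mmap F f) ∘ l X ∘ fmap K (pairing P u (idm _)).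
Proof. rewrite <- l_nat, comp_id_r. reflexivity. Qed.

Lemma bplus_mu {L : A} (beta : Hom L (H (Mo F L))) :
  bplus l beta ∘ mu F L = fmap H (mu F L) ∘ bplus l (fmap H (eta F (Mo F L)) ∘ bplus l beta).
Proof.
  set (b2 := bplus l (fmap H (eta F (Mo F L)) ∘ bplus l beta)).
  assert (E1 : pairing P (bplus l beta ∘ mu F L) (mu F L) = ext F (algL l L) (pairing P (bplus l beta) (idm _))).
  { rewrite <- bplus_ext in *. transitivity (ext F (algL l L) (pairing P beta (eta F L)) ∘ mu F L).
    { rewrite bplus_ext, pair_comp, comp_id_l. reflexivity. }
    unfold mu. rewrite ext_kl, comp_id_r. reflexivity. }
  assert (E2 : pairing P (fmap H (mu F L) ∘ b2) (mu F L) = ext F (algL l L) (pairing P (bplus l beta) (idm _))).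
  { apply ext_unique.
    - rewrite pair_comp, <- cA. unfold b2. rewrite bplus_eta, mu_eta, cA, <- fmap_comp, mu_eta, fmap_id, comp_id_l.
      reflexivity.
    - apply pair_ext.
      + unfold algL. rewrite !cA, !pi1_pair, <- !cA, l_nat1.
        unfold b2. rewrite bplus_phi, !cA, <- !fmap_comp, mu_assoc. reflexivity.
      + unfold algL. rewrite !cA, !pi2_pair, <- cA, <- fmap_comp, pi2_pair, mu_phi.
        reflexivity. }
  rewrite <- E2 in E1. apply (f_equal (fun h => pi1 P ∘ h)) in E1. rewrite !pi1_pair in E1. exact E1.
Qed.

End G3.
Set Implicit Arguments.
Unset Strict Implicit.

Section G4.
Variable A : Category.
Variable P : BinProducts A.
Variables H K : Functor A.
Variable F : FreeAlgebras K.
Variable l : forall X : A, Hom (K (bprod P (H X) X)) (H (Mo F X)).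
Hypothesis Hl : is_gsos_rule l.
Variable C : A.
Variable c : Hom C (H C).
Hypothesis Hterm : is_terminal_coalgebra c.
Variable b : Hom (K C) C.
Hypothesis Hb : is_interpretation l c b.

Lemma term_uniq {X : A} (x : Hom X (H X)) (f g : Hom X C) :
  c ∘ f = fmap H f ∘ x -> c ∘ g = fmap H g ∘ x -> f = g.
Proof.
  intros Ef Eg. destruct (Hterm x) as [f0 [_ U]]. rewrite <- (U f Ef), <- (U g Eg). reflexivity.
Qed.

Lemma sharp_M {Y : A} (f : Hom Y C) : sharp F b ∘ Mmap F f = ext F b f.
Proof. unfold sharp, Mmap. rewrite ext_kl, cA, ext_eta, comp_id_l. reflexivity. Qed.

Lemma ext_mu {L : A} (g : Hom L C) : ext F b g ∘ mu F L = ext F b (ext F b g).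
Proof. unfold mu. rewrite ext_kl, comp_id_r. reflexivity. Qed.

Lemma KEY {L : A} (beta : Hom L (H (Mo F L))) (g : Hom L C) :
  c ∘ g = fmap H (ext F b g) ∘ beta ->
  c ∘ ext F b g = fmap H (ext F b g) ∘ bplus l beta.
Proof.
  intro Hg. set (E := ext F b g).
  set (algC := pairing P (fmap H (sharp F b) ∘ l C) (b ∘ fmap K (pi2 P))).
  assert (E1 : pairing P (c ∘ E) E = ext F algC (pairing P (c ∘ g) g)).
  { apply ext_unique.
    - rewrite pair_comp, <- cA. unfold E. rewrite ext_eta. reflexivity.
    - apply pair_ext.
      + unfold algC. rewrite !cA, !pi1_pair, <- !cA. unfold E. rewrite ext_hom, cA, Hb, <- !cA,
          <- fmap_comp, pair_comp, comp_id_l. reflexivity.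
      + unfold algC. rewrite !cA, !pi2_pair, <- cA, <- fmap_comp, pi2_pair. unfold E.
        apply ext_hom. }
  assert (E2 : pairing P (fmap H E ∘ bplus l beta) E = ext F algC (pairing P (c ∘ g) g)).
  { apply ext_unique.
    - rewrite pair_comp, <- cA, bplus_eta. unfold E. rewrite ext_eta, <- Hg. reflexivity.
    - apply pair_ext.
      + unfold algC. rewrite !cA, !pi1_pair, <- !cA, l_nat1, bplus_phi; auto.
        rewrite !cA, <- !fmap_comp, sharp_M. unfold E. rewrite ext_mu. reflexivity.
      + unfold algC. rewrite !cA, !pi2_pair, <- cA, <- fmap_comp, pi2_pair. unfold E.
        apply ext_hom. }
  rewrite <- E2 in E1. apply (f_equal (fun h => pi1 P ∘ h)) in E1. rewrite !pi1_pair in E1. exact E1.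
Qed.

Lemma Core {L : A} (beta : Hom L (H (Mo F L))) :
  exists! g : Hom L C, c ∘ g = fmap H (ext F b g) ∘ beta.
Proof.
  destruct (Hterm (bplus l beta)) as [h [Hh _]].
  set (beta' := fmap H (eta F (Mo F L)) ∘ bplus l beta).
  assert (Ehm : ext F b h = h ∘ mu F L).
  { assert (Hc1 : c ∘ ext F b h = fmap H (ext F b h) ∘ bplus l beta').
    { apply KEY. unfold beta'. rewrite cA, <- fmap_comp, ext_eta. exact Hh. }
    assert (Hc2 : c ∘ (h ∘ mu F L) = fmap H (h ∘ mu F L) ∘ bplus l beta').
    { rewrite cA, Hh, <- cA. unfold beta'. rewrite bplus_mu; auto. rewrite cA, <- fmap_comp. reflexivity. }
    exact (term_uniq Hc1 Hc2). }
  assert (Eh : h = ext F b (h ∘ eta F L)).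
  { transitivity (h ∘ mu F L ∘ Mmap F (eta F L)).
    - rewrite <- cA, mu_Meta, comp_id_r. reflexivity.
    - rewrite <- Ehm. unfold Mmap. rewrite ext_kl, cA, ext_eta. reflexivity. }
  exists (h ∘ eta F L). split.
  - rewrite <- Eh, cA, Hh, <- cA, bplus_eta. reflexivity.
  - intros g' Hg'. assert (Eg : ext F b g' = h).
    { exact (term_uniq (KEY Hg') Hh). }
    rewrite <- Eg, ext_eta. reflexivity.
Qed.

End G4.
Set Implicit Arguments.
Unset Strict Implicit.

Lemma ext_Mmap (A : Category) (K : Functor A) (F : FreeAlgebras K) (X Y Z : A)
  (a : Hom (K Z) Z) (g : Hom Y Z) (f : Hom X Y) :
  ext F a g ∘ Mmap F f = ext F a (g ∘ f).
Proof. unfold Mmap. rewrite ext_kl, cA, ext_eta. reflexivity. Qed.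

Theorem mainTheorem3 (A : Category) (P : BinProducts A) (S : BinCoproducts A)
  (H K : Functor A) (C : A) (c : Hom C (H C)) (cinv : Hom (H C) C)
  (Hterm : @is_terminal_coalgebra A H C c)
  (Hinv1 : cinv ∘ c = idm C) (Hinv2 : c ∘ cinv = idm (H C))
  (F : FreeAlgebras K)
  (l : forall X : A, Hom (K (bprod P (H X) X)) (H (Mo F X)))
  (Hl : @is_gsos_rule A P H K F l)
  (b : Hom (K C) C) (Hb : @is_interpretation A P H K F l C c b) :
  let k : Hom (H (Mo F C)) C := cinv ∘ fmap H (sharp F b) in
  let k' : Hom (Mo F (H (Mo F C))) C := sharp F b ∘ Mmap F k in
  @is_cia A S (Fcomp (Mfun F) (Fcomp H (Mfun F))) C k'.
Proof.
  intros k k' X e.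
  set (R := fun s : Hom X C => copair S (ext F b (cinv ∘ fmap H (ext F b s))) (idm C) ∘ e).
  assert (ER : forall s : Hom X C,
    copair S k' (idm C) ∘ coprod_map S (fmap (Fcomp (Mfun F) (Fcomp H (Mfun F))) s) (idm C) ∘ e = R s).
  { intro s. unfold R, coprod_map. f_equal. rewrite copair_comp, !cA, copair_inl, copair_inr, ?comp_id_l,
      ?comp_id_r. f_equal. simpl. unfold k', k.
    rewrite <- cA, <- Mmap_comp, <- cA, <- fmap_comp, sharp_M, sharp_M. reflexivity. }
  cut (exists! s : Hom X C, s = R s).
  { intros [s [Hs U]]. exists s. split.
    - rewrite ER. exact Hs.
    - intros s' Hs'. apply U. rewrite <- ER. exact Hs'. }
  set (tau := copair S (Mmap F (inl_ S (X:=H (Mo F X)) (Y:=C))) (eta F (bcoprod S (H (Mo F X)) C) ∘ inr_ S) : Hom (bcoprod S (Mo F (H (Mo F X))) C) (Mo F (bcoprod S (H (Mo F X)) C))).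
  set (sigma := ext F (phi F (bcoprod S (H (Mo F X)) C)) (tau ∘ e)).
  set (beta := copair S (fmap H sigma) (fmap H (eta F (bcoprod S (H (Mo F X)) C) ∘ inr_ S) ∘ c) : Hom (bcoprod S (H (Mo F X)) C) (H (Mo F (bcoprod S (H (Mo F X)) C)))).
  assert (Etau : forall g : Hom (bcoprod S (H (Mo F X)) C) C, ext F b g ∘ tau = copair S (ext F b (g ∘ inl_ S)) (g ∘ inr_ S)).
  { intro g. unfold tau. rewrite copair_comp, ext_Mmap, cA, ext_eta. reflexivity. }
  assert (Esig : forall g : Hom (bcoprod S (H (Mo F X)) C) C, ext F b g ∘ sigma = ext F b (ext F b g ∘ tau ∘ e)).
  { intro g. unfold sigma. rewrite ext_kl, cA. reflexivity. }
  destruct (Core Hl Hterm Hb beta) as [g0 [Hg0 U0]].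
  assert (Hinr : g0 ∘ inr_ S = idm C).
  { assert (Hc1 : c ∘ (g0 ∘ inr_ S) = fmap H (g0 ∘ inr_ S) ∘ c).
    { rewrite cA, Hg0, <- cA. unfold beta. rewrite copair_inr, cA, <- fmap_comp, cA, ext_eta.
      reflexivity. }
    assert (Hc2 : c ∘ idm C = fmap H (idm C) ∘ c) by (rewrite fmap_id, comp_id_l, comp_id_r; reflexivity).
    exact (term_uniq Hterm Hc1 Hc2). }
  exists (ext F b g0 ∘ tau ∘ e). split.
  - set (s0 := ext F b g0 ∘ tau ∘ e). unfold R. unfold s0 at 1. rewrite Etau, Hinr.
    f_equal. f_equal. f_equal.
    rewrite <- (comp_id_l (g0 ∘ inl_ S)), <- Hinv1, <- !cA, (cA c g0), Hg0. unfold beta.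
    rewrite <- cA, copair_inl, <- fmap_comp, Esig. reflexivity.
  - intros s1 Hs1.
    set (g1 := copair S (cinv ∘ fmap H (ext F b s1)) (idm C) : Hom (bcoprod S (H (Mo F X)) C) C).
    assert (Es1 : ext F b g1 ∘ tau ∘ e = s1).
    { rewrite Etau. unfold g1. rewrite copair_inl, copair_inr. symmetry. exact Hs1. }
    assert (Hg1 : c ∘ g1 = fmap H (ext F b g1) ∘ beta).
    { apply copair_ext.
      - rewrite <- !cA. unfold beta, g1. rewrite !copair_inl, cA, Hinv2, comp_id_l, <- fmap_comp.
        fold g1. rewrite Esig, Es1. reflexivity.
      - rewrite <- !cA. unfold beta, g1. rewrite !copair_inr, comp_id_r, cA, <- fmap_comp, cA, ext_eta,
          copair_inr, fmap_id, comp_id_l. reflexivity. }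
    rewrite <- Es1. rewrite <- (U0 g1 Hg1). reflexivity.
Qed.
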